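(* $c(9)\ge 6$.
   Context: $\mathbb{F}_q$ is the finite field with $q$ elements. Hamming distance $d(u,v)=|\{i:u_i\ne v_i\}|$ on $\mathbb{F}_q^3$; $B(u)=\{v:d(u,v)\le1\}$; $E(u)=\bigcup_{\lambda\in\mathbb{F}_q}B(\lambda u)$. A set $\mathcal{H}\subseteq\mathbb{F}_q^3$ is a short covering if $\bigcup_{h\in\mathcal{H}}E(h)=\mathbb{F}_q^3$; $c(q)$ is the minimum cardinality of a short covering of $\mathbb{F}_q^3$. *)

(* Defs.v *)
From HB Require Import structures.
From mathcomp Require Import all_boot all_order all_algebra all_field.
Set Implicit Arguments. Unset Strict Implicit. Unset Printing Implicit Defensive.
Import GRing.Theory.
Local Open Scope ring_scope.

Definition hamming (F : finFieldType) (u v : 'rV[F]_3) : nat :=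
  #|[set i : 'I_3 | u 0 i != v 0 i]|.

Definition ball1 (F : finFieldType) (u : 'rV[F]_3) : {set 'rV[F]_3} :=
  [set v | (hamming u v <= 1)%N].

Definition Eset (F : finFieldType) (u : 'rV[F]_3) : {set 'rV[F]_3} :=
  \bigcup_(lam : F) ball1 (lam *: u).

Definition short_covering (F : finFieldType) (H : {set 'rV[F]_3}) : Prop :=
  \bigcup_(h in H) Eset h = [set: 'rV[F]_3].

(* Main.v *)
Require Import Defs.
From mathcomp Require Import all_boot all_order all_algebra all_field.
From mathcomp Require Import ring zify.
Import GRing.Theory.

Section Aux.
Set Implicit Arguments.
Local Open Scope ring_scope.
Context {F : finFieldType}.

Definition i0 : 'I_3 := @Ordinal 3 0 isT.
Definition i1 : 'I_3 := @Ordinal 3 1 isT.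
Definition i2 : 'I_3 := @Ordinal 3 2 isT.

Definition mk (a b c : F) : 'rV[F]_3 := \row_(i < 3) nth 0 [:: a; b; c] i.

Lemma mk0 a b c : mk a b c 0 i0 = a. Proof. by rewrite mxE. Qed.
Lemma mk1 a b c : mk a b c 0 i1 = b. Proof. by rewrite mxE. Qed.
Lemma mk2 a b c : mk a b c 0 i2 = c. Proof. by rewrite mxE. Qed.

Lemma two_le (a b : 'rV[F]_3) (i j : 'I_3) : i != j ->
  a 0 i != b 0 i -> a 0 j != b 0 j -> (1 < hamming a b)%N.
Proof.
move=> ij hi hj.
have : [set i; j] \subset [set k | a 0 k != b 0 k].
  by apply/subsetP => k; rewrite !inE => /orP[]/eqP->.
by move/subset_leq_card; rewrite cards2 ij.
Qed.

Definition agree (lam : F) (u v : 'rV[F]_3) :=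
  (lam * u 0 i0 = v 0 i0 /\ lam * u 0 i1 = v 0 i1) \/
  (lam * u 0 i0 = v 0 i0 /\ lam * u 0 i2 = v 0 i2) \/
  (lam * u 0 i1 = v 0 i1 /\ lam * u 0 i2 = v 0 i2).

Lemma ham_agree lam (u v : 'rV[F]_3) :
  (hamming (lam *: u) v <= 1)%N -> agree lam u v.
Proof.
move=> h; rewrite /agree.
have e : forall k, (lam * u 0 k) = (lam *: u) 0 k by move=> k; rewrite mxE.
rewrite !e.
case: (eqVneq ((lam *: u) 0 i0) (v 0 i0)) => e0;
case: (eqVneq ((lam *: u) 0 i1) (v 0 i1)) => e1;
case: (eqVneq ((lam *: u) 0 i2) (v 0 i2)) => e2; try by tauto.
all: exfalso.
- by have := @two_le _ _ i1 i2 isT e1 e2; rewrite ltnNge h.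
- by have := @two_le _ _ i0 i2 isT e0 e2; rewrite ltnNge h.
- by have := @two_le _ _ i0 i1 isT e0 e1; rewrite ltnNge h.
- by have := @two_le _ _ i0 i1 isT e0 e1; rewrite ltnNge h.
Qed.


Lemma cover (H : {set 'rV[F]_3}) : short_covering H ->
  forall v, exists2 u, u \in H & exists lam, agree lam u v.
Proof.
move=> hH v.
have : v \in \bigcup_(h in H) Eset h by rewrite hH inE.
case/bigcupP => u uH; rewrite /Eset => /bigcupP [lam _].
rewrite /ball1 inE => /ham_agree h; exists u => //; by exists lam.
Qed.

Lemma nz_l {lam a b : F} : lam * a = b -> b != 0 -> lam != 0 /\ a != 0.
Proof. by move=> <-; rewrite mulf_eq0 negb_or => /andP[]. Qed.

Lemma z_r {lam a : F} : lam * a = 0 -> lam != 0 -> a = 0.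
Proof. by move=> /eqP; rewrite mulf_eq0 => /orP[/eqP->|/eqP->]; rewrite ?eqxx. Qed.

Lemma ratio {lam a b y : F} : lam * a = 1 -> lam * b = y -> y = b / a.
Proof.
move=> h0 h1; have [l0 a0] := nz_l h0 (oner_neq0 F).
have e : lam = a^-1 by rewrite -(mulfK a0 lam) h0 mul1r.
by rewrite -h1 e mulrC.
Qed.

Lemma ratio2 {lam a b y z : F} : lam * a = y -> lam * b = z -> y != 0 -> z / y = b / a.
Proof.
move=> h1 h2 hy; have [l0 a0] := nz_l h1 hy.
rewrite -h1 -h2; field; by rewrite l0 a0.
Qed.

Lemma cover_card (N A B : {set F}) (f : F -> F) :
  N \subset A :|: [set f x | x in B] -> (#|N| <= #|A| + #|B|)%N.
Proof.
move/subset_leq_card => h; apply: leq_trans h _.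
apply: leq_trans (leq_card_setU _ _).1 _.
by rewrite leq_add2l leq_imset_card.
Qed.

Lemma card_sep (H : {set 'rV[F]_3}) (P : pred 'rV[F]_3) :
  #|[set u in H | P u]| = (\sum_(u in H) (P u : nat))%N.
Proof.
rewrite -sum1dep_card big_mkcondr /=.
by apply: eq_bigr => u _; case: (P u).
Qed.

End Aux.
Local Open Scope ring_scope.

Lemma main_aux (F : finFieldType) (hF : #|F| = 9%N)
  (H : {set 'rV[F]_3}) (hH : short_covering H) (h5 : (#|H| <= 5)%N) : False.
Proof.
pose H01 := [set u in H | (u 0 i0 != 0) && (u 0 i1 != 0)].
pose H02 := [set u in H | (u 0 i0 != 0) && (u 0 i2 != 0)].
pose H12 := [set u in H | (u 0 i1 != 0) && (u 0 i2 != 0)].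
pose R := (fun u : 'rV[F]_3 => u 0 i1 / u 0 i0) @: H01.
pose C := (fun u : 'rV[F]_3 => u 0 i2 / u 0 i0) @: H02.
pose D := (fun u : 'rV[F]_3 => u 0 i2 / u 0 i1) @: H12.
pose N := [set~ (0:F)].
have cN : #|N| = 8%N by rewrite cardsC1 hF.
have cR : (#|R| <= #|H01|)%N := leq_imset_card _ _.
have cC : (#|C| <= #|H02|)%N := leq_imset_card _ _.
have cD : (#|D| <= #|H12|)%N := leq_imset_card _ _.
have sub : forall P : pred 'rV[F]_3, (#|[set u in H | P u]| <= #|H|)%N.
  by move=> P; apply: subset_leq_card; apply/subsetP => u; rewrite inE => /andP[].
have c01 : (#|H01| <= #|H|)%N := sub _.
have c02 : (#|H02| <= #|H|)%N := sub _.
have c12 : (#|H12| <= #|H|)%N := sub _.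
have inN : forall x, (x \in N) = (x != 0) by move=> x; rewrite in_setC1.
have outside : forall S : {set F}, (#|S| <= 5)%N -> exists2 x, x \in N & x \notin S.
  move=> S hS; case: (boolP (N \subset S)) => [/subset_leq_card|/subsetPn [x xN xS]].
    by rewrite cN => h; exfalso; lia.
  by exists x.
have T : forall y z : F, y != 0 -> z != 0 -> [|| y \in R, z \in C | z / y \in D].
  move=> y z hy hz; have [u uH [lam hag]] := cover hH (@mk _ 1 y z).
  move: hag; rewrite /agree !mk0 !mk1 !mk2 => [[[h0 h1]|[[h0 h2]|[h1 h2]]]].
  - have [_ u0] := nz_l h0 (oner_neq0 F); have [_ u1] := nz_l h1 hy.
    apply/orP; left; apply/imsetP; exists u; first by rewrite inE uH u0 u1.
    exact: ratio h0 h1.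
  - have [_ u0] := nz_l h0 (oner_neq0 F); have [_ u2] := nz_l h2 hz.
    apply/or3P; apply: Or32; apply/imsetP; exists u; first by rewrite inE uH u0 u2.
    exact: ratio h0 h2.
  - have [_ u1] := nz_l h1 hy; have [_ u2] := nz_l h2 hz.
    apply/or3P; apply: Or33; apply/imsetP; exists u; first by rewrite inE uH u1 u2.
    exact: ratio2 h1 h2 hy.
have rd : (8 <= #|R| + #|D|)%N.
  have [z0 z0N z0C] := outside C ltac:(lia).
  rewrite -cN; apply: (@cover_card _ _ _ _ (fun t => z0 / t)).
  apply/subsetP => y yN; rewrite in_setU; rewrite inN in yN; rewrite inN in z0N.
  case/or3P: (T y z0 yN z0N) => [->//|h|h]; first by rewrite h in z0C.
  apply/orP; right; apply/imsetP; exists (z0 / y) => //.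
  field; by rewrite yN z0N.
have cd : (8 <= #|C| + #|D|)%N.
  have [y0 y0N y0R] := outside R ltac:(lia).
  rewrite -cN; apply: (@cover_card _ _ _ _ (fun t => t * y0)).
  apply/subsetP => z zN; rewrite in_setU; rewrite inN in zN; rewrite inN in y0N.
  case/or3P: (T y0 z y0N zN) => [h|->//|h]; first by rewrite h in y0R.
  apply/orP; right; apply/imsetP; exists (z / y0) => //.
  field; by rewrite y0N.
have rc : (8 <= #|R| + #|C|)%N.
  have [t0 t0N t0D] := outside D ltac:(lia).
  rewrite -cN; apply: (@cover_card _ _ _ _ (fun z => z / t0)).
  apply/subsetP => y yN; rewrite in_setU; rewrite inN in yN; rewrite inN in t0N.
  have ty : t0 * y != 0 by rewrite mulf_neq0.
  case/or3P: (T y (t0 * y) yN ty) => [->//|h|h].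
    apply/orP; right; apply/imsetP; exists (t0 * y) => //.
    field; by rewrite t0N.
  have e : t0 * y / y = t0 by field; rewrite yN.
  by rewrite e in h; rewrite h in t0D.
pose A3 := [set u in H | (u 0 i2 == 0) && ((u 0 i0 != 0) || (u 0 i1 != 0))].
pose A2 := [set u in H | (u 0 i1 == 0) && ((u 0 i0 != 0) || (u 0 i2 != 0))].
pose A1 := [set u in H | (u 0 i0 == 0) && ((u 0 i1 != 0) || (u 0 i2 != 0))].
have one := oner_neq0 F.
have [a3 a3A] : exists u, u \in A3.
  case: (set_0Vmem A3) => [A30|[u hu]]; last by exists u.
  exfalso; have : N \subset R.
    apply/subsetP => y; rewrite inN => hy.
    have [u uH [lam hag]] := cover hH (@mk _ 1 y 0).
    move: hag; rewrite /agree !mk0 !mk1 !mk2 => [[[h0 h1]|[[h0 h2]|[h1 h2]]]].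
    - have [_ u0] := nz_l h0 one; have [_ u1] := nz_l h1 hy.
      apply/imsetP; exists u; first by rewrite inE uH u0 u1.
      exact: ratio h0 h1.
    - have [l0 u0] := nz_l h0 one; have u2 := z_r h2 l0.
      have : u \in A3 by rewrite inE uH u2 eqxx u0.
      by rewrite A30 inE.
    - have [l0 u1] := nz_l h1 hy; have u2 := z_r h2 l0.
      have : u \in A3 by rewrite inE uH u2 eqxx u1 orbT.
      by rewrite A30 inE.
  move/subset_leq_card; rewrite cN; lia.
have [a2 a2A] : exists u, u \in A2.
  case: (set_0Vmem A2) => [A20|[u hu]]; last by exists u.
  exfalso; have : N \subset C.
    apply/subsetP => z; rewrite inN => hz.
    have [u uH [lam hag]] := cover hH (@mk _ 1 0 z).
    move: hag; rewrite /agree !mk0 !mk1 !mk2 => [[[h0 h1]|[[h0 h2]|[h1 h2]]]].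
    - have [l0 u0] := nz_l h0 one; have u1 := z_r h1 l0.
      have : u \in A2 by rewrite inE uH u1 eqxx u0.
      by rewrite A20 inE.
    - have [_ u0] := nz_l h0 one; have [_ u2] := nz_l h2 hz.
      apply/imsetP; exists u; first by rewrite inE uH u0 u2.
      exact: ratio h0 h2.
    - have [l0 u2] := nz_l h2 hz; have u1 := z_r h1 l0.
      have : u \in A2 by rewrite inE uH u1 eqxx u2 orbT.
      by rewrite A20 inE.
  move/subset_leq_card; rewrite cN; lia.
have [a1 a1A] : exists u, u \in A1.
  case: (set_0Vmem A1) => [A10|[u hu]]; last by exists u.
  exfalso; have : N \subset D.
    apply/subsetP => z; rewrite inN => hz.
    have [u uH [lam hag]] := cover hH (@mk _ 0 1 z).
    move: hag; rewrite /agree !mk0 !mk1 !mk2 => [[[h0 h1]|[[h0 h2]|[h1 h2]]]].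
    - have [l0 u1] := nz_l h1 one; have u0 := z_r h0 l0.
      have : u \in A1 by rewrite inE uH u0 eqxx u1.
      by rewrite A10 inE.
    - have [l0 u2] := nz_l h2 hz; have u0 := z_r h0 l0.
      have : u \in A1 by rewrite inE uH u0 eqxx u2 orbT.
      by rewrite A10 inE.
    - have [_ u1] := nz_l h1 one; have [_ u2] := nz_l h2 hz.
      apply/imsetP; exists u; first by rewrite inE uH u1 u2.
      exact: ratio h1 h2.
  move/subset_leq_card; rewrite cN; lia.
pose Zx := [set u in H | [|| u 0 i0 == 0, u 0 i1 == 0 | u 0 i2 == 0]].
have Z1 : a1 \in Zx by move: a1A; rewrite !inE => /andP[-> /andP[-> _]].
have Z2 : a2 \in Zx by move: a2A; rewrite !inE => /andP[-> /andP[-> _]]; rewrite orbT.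
have Z3 : a3 \in Zx by move: a3A; rewrite !inE => /andP[-> /andP[-> _]]; rewrite !orbT.
have cZ : (2 <= #|Zx|)%N.
  have key : forall x y, x \in Zx -> y \in Zx -> x != y -> (2 <= #|Zx|)%N.
    move=> x y xZ yZ xy; have : [set x; y] \subset Zx.
      by apply/subsetP => w /set2P[]->.
    by move/subset_leq_card; rewrite cards2 xy.
  case: (eqVneq a1 a2) => [e12|]; last exact: key Z1 Z2.
  case: (eqVneq a1 a3) => [e13|]; last exact: key Z1 Z3.
  move: a1A a2A a3A; rewrite -e12 -e13 !inE.
  by case: (a1 0 i0 == 0); case: (a1 0 i1 == 0); case: (a1 0 i2 == 0); rewrite ?andbF.
have sumb : (#|H01| + #|H02| + #|H12| + 2 * #|Zx| <= 3 * #|H|)%N.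
  rewrite /H01 /H02 /H12 /Zx !card_sep big_distrr /= -!big_split /=.
  rewrite mulnC -sum_nat_const; apply: leq_sum => u _.
  by case: (u 0 i0 == 0); case: (u 0 i1 == 0); case: (u 0 i2 == 0).
lia.
Qed.

Theorem proposition20 (F : finFieldType) (hF : #|F| = 9%N)
  (H : {set 'rV[F]_3}) (hH : short_covering H) : (6 <= #|H|)%N.
Proof.
rewrite leqNgt; apply/negP => h; apply: (main_aux hF hH); lia.
Qed.
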